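(* Fix $d\ge1$. Let $(\mathcal{F},s)$ be a uniformly random $d$-Shuffled Simon's instance of size $n$. Let $\mathcal{A}^{\mathcal{F}}=\Pi\circ U_{d+1}\circ\mathcal{F}\circ U_d\circ\cdots\circ\mathcal{F}\circ U_1$ be any $\mathrm{QNC}_d$ circuit acting on $\mathrm{poly}(n)$ qubits initialised to $|0\cdots0\rangle$, with single-layer unitaries $U_j$ independent of the oracle, polynomially many parallel queries per oracle application, and a final computational-basis measurement $\Pi$. Then $\Pr[s\leftarrow\mathcal{A}^{\mathcal{F}}]\le\mathrm{poly}(n)\cdot2^{-n}$.
   Context: Identify $\{0,1\}^n$ with $\{0,\dots,N-1\}$, $N=2^n$, and embed it in $\{0,1\}^{2n}$ by prefixing $n$ zeros. A $d$-Shuffler for a function $f:\{0,1\}^n\to\{0,1\}^n$ is the tuple of functions $(f_0,\dots,f_d)$ on $\{0,1\}^{2n}\cup\{\perp\}$ sampled as follows: let $t_{-1}=(0,1,\dots,N-1)$; let $t_0,\dots,t_{d-1}$ be independent, each uniformly random among tuples of $N$ distinct elements of $\{0,1\}^{2n}$; let $t_d=(f(0),\dots,f(N-1))$. For $0\le i\le d$: if $x$ is the $j$-th entry of $t_{i-1}$ then $f_i(x)$ is the $j$-th entry of $t_i$; otherwise (including $x=\perp$) $f_i(x)=\perp$. Thus $f_d\circ\cdots\circ f_0(x)=f(x)$ for $x\in\{0,1\}^n$. $d$-Shuffled Simon's instance: sample a uniformly random Simon function $(g,s)$ ($s\ne0^n$, $g$ two-to-one with $g(x)=g(y)\iff y\in\{x,x\oplus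 s\}$), then a $d$-Shuffler $(f_0,\dots,f_d)$ for $g$; $\mathcal{F}$ is the standard (XOR) oracle for $(f_0,\dots,f_d)$ (with $\perp$ encoded as a distinguished string). Goal: output $s$. A single-layer unitary is a product of one- and two-qubit gates on disjoint qubits. *)

(* Defs.v *)
From mathcomp Require Import all_boot all_algebra.
From mathcomp Require Import reals complex.
Set Implicit Arguments. Unset Strict Implicit. Unset Printing Implicit Defensive.
Import GRing.Theory Num.Theory.
Local Open Scope ring_scope.

Definition bs (n : nat) := {ffun 'I_n -> bool}.
Definition zeros (n : nat) : bs n := [ffun => false].
Definition bxor (n : nat) (x y : bs n) : bs n := [ffun i => x i (+) y i].
(* bit p of x (false when out of range) *)
Definition getb (n : nat) (x : bs n) (p : nat) : bool :=
  if (insub p : option 'I_n) is Some q then x q else false.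

Definition embed (n : nat) (x : bs n) : bs (n + n) :=
  [ffun i => match split i with inl _ => false | inr j => x j end].

Definition simon_pair (n : nat) (g : {ffun bs n -> bs n}) (s : bs n) : bool :=
  (s != zeros n) &&
  [forall x, forall y, (g x == g y) == ((y == x) || (y == bxor x s))].

(* t_{i-1} for i = 0..d+1:  t_{-1} = embed, t_0..t_{d-1} = T, t_d = embed \o g *)
Definition tup (n d : nat) (g : {ffun bs n -> bs n})
  (T : {ffun 'I_d -> {ffun bs n -> bs (n + n)}}) (i : nat) : bs n -> bs (n + n) :=
  match i with
  | 0 => @embed n
  | i'.+1 => if (insub i' : option 'I_d) is Some j then T j else (fun x => embed (g x))
  end.

(* f_i on {0,1}^{2n} \cup {bot}, bot = None *)
Definition shuf_fun (n d : nat) (g : {ffun bs n -> bs n})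
  (T : {ffun 'I_d -> {ffun bs n -> bs (n + n)}}) (i : nat)
  (x : option (bs (n + n))) : option (bs (n + n)) :=
  match x with
  | None => None
  | Some v => if [pick j | tup g T i j == v] is Some j
              then Some (tup g T i.+1 j) else None
  end.

(* bit 0 is a flag; Some v ↦ (0, v), None ↦ (1, 0^{2n});
   any string with flag 1 decodes to bot *)
Definition enc (n : nat) (v : option (bs (n + n))) (j : nat) : bool :=
  match v with
  | None => j == 0%N
  | Some u => if j is j'.+1 then getb u j' else false
  end.
Definition dec (n : nat) (b : nat -> bool) : option (bs (n + n)) :=
  if b 0%N then None else Some [ffun j : 'I_(n + n) => b j.+1].

(* One query slot = (d+1) index qubits, (2n+1) input qubits, (2n+1) output qubits *)
Definition elen (n : nat) := (n + n).+1.
Definition qwidth (d n : nat) := (d.+1 + elen n + elen n)%N.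

(* The oracle permutation of basis states: k parallel query slots occupying
   qubits [0, k*w); slot s maps |i, x, y> to |i, x, y xor f_i(x)> when i <= d
   (identity when the index i > d); all other qubits are untouched. *)
Definition oracle_map (n d m k : nat) (fs : nat -> option (bs (n + n)) -> option (bs (n + n)))
  (y : bs m) : bs m :=
  [ffun q : 'I_m =>
     let p := nat_of_ord q in
     let w := qwidth d n in
     if (p < k * w)%N then
       let base := (p %/ w * w)%N in
       let o := (p %% w)%N in
       let idx := (\sum_(t < d.+1) getb y (base + t) * 2 ^ t)%N in
       let inp := dec n (fun j => getb y (base + d.+1 + j)) in
       if ((d.+1 + elen n <= o) && (idx <= d))%N
       then y q (+) enc (fs idx inp) (o - (d.+1 + elen n))
       else y q
     else y q].

Section Quantum.
Variable R : realType.
Local Notation C := R[i].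

(* operators on m qubits as (row, column) coefficient functions; states as amplitude functions *)
Definition applyop (m : nat) (A : bs m -> bs m -> C) (psi : bs m -> C) : bs m -> C :=
  fun x => \sum_(y : bs m) A x y * psi y.

Definition unitaryf (T : finType) (U : T -> T -> C) : Prop :=
  forall x y : T, \sum_(z : T) (U z x)^* * U z y = (x == y)%:R.

Inductive gate (m : nat) :=
| G1 of 'I_m & (bool -> bool -> C)
| G2 of 'I_m & 'I_m & (bool * bool -> bool * bool -> C).

Definition gate_supp (m : nat) (g : gate m) : {set 'I_m} :=
  match g with G1 a _ => [set a] | G2 a b _ => [set a; b] end.

Definition gate_ok (m : nat) (g : gate m) : Prop :=
  match g with
  | G1 _ U => unitaryf U
  | G2 a b U => a != b /\ unitaryf U
  end.

(* the gate tensored with the identity on the other qubits *)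
Definition gate_op (m : nat) (g : gate m) : bs m -> bs m -> C :=
  fun x y =>
    [forall q, (q \notin gate_supp g) ==> (x q == y q)]%:R *
    match g with
    | G1 a U => U (x a) (y a)
    | G2 a b U => U (x a, x b) (y a, y b)
    end.

Definition single_layer (m : nat) (gs : seq (gate m)) : Prop :=
  foldr (fun g P => gate_ok g /\ P) True gs /\
  pairwise (fun g h => [disjoint gate_supp g & gate_supp h]) gs.

Definition apply_layer (m : nat) (gs : seq (gate m)) (psi : bs m -> C) : bs m -> C :=
  foldr (fun g phi => applyop (gate_op g) phi) psi gs.

Definition psi0 (m : nat) : bs m -> C := fun x => (x == zeros m)%:R.

Definition oracle_op (n d m k : nat) fs : bs m -> bs m -> C :=
  fun x y => (x == @oracle_map n d m k fs y)%:R.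

(* state after U_{j+1} F U_j ... F U_1 |0..0> *)
Fixpoint evolve (n d m k : nat) fs (layers : nat -> seq (gate m)) (j : nat) : bs m -> C :=
  match j with
  | 0 => apply_layer (layers 0%N) (@psi0 m)
  | j'.+1 => apply_layer (layers j)
               (applyop (@oracle_op n d m k fs) (@evolve n d m k fs layers j'))
  end.

Definition success_on (n d m k : nat) (layers : nat -> seq (gate m)) (out : bs m -> bs n)
  (g : {ffun bs n -> bs n}) (s : bs n) (T : {ffun 'I_d -> {ffun bs n -> bs (n + n)}}) : C :=
  let psi := @evolve n d m k (shuf_fun g T) layers d in
  \sum_(x : bs m) (out x == s)%:R * `|psi x| ^+ 2.

(* sample space: uniform Simon pair (g,s) and independent uniform injective t_0..t_{d-1} *)
Definition instances (n d : nat) :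
  {set ({ffun bs n -> bs n} * bs n * {ffun 'I_d -> {ffun bs n -> bs (n + n)}})} :=
  [set w : ({ffun bs n -> bs n} * bs n * {ffun 'I_d -> {ffun bs n -> bs (n + n)}}) |
     simon_pair w.1.1 w.1.2 && [forall i : 'I_d, injectiveb (w.2 i)]].

Definition success_prob (n d m k : nat) (layers : nat -> seq (gate m)) (out : bs m -> bs n) : C :=
  (\sum_(w in instances n d) @success_on n d m k layers out w.1.1 w.1.2 w.2) / #|instances n d|%:R.

End Quantum.

(* Main.v *)
Require Import Defs.
From mathcomp Require Import all_boot all_algebra.
From mathcomp Require Import reals complex.
From mathcomp Require Import all_order all_fingroup.
From Stdlib Require Import FunctionalExtensionality.
From mathcomp Require Import ring zify.
Set Implicit Arguments. Unset Strict Implicit. Unset Printing Implicit Defensive.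
Import Order.TTheory GRing.Theory Num.Theory.
Local Open Scope ring_scope.

Section Lin.
Variable R : realType.
Local Notation C := R[i].
Variable m : nat.
Implicit Types psi phi : bs m -> C.

Definition nrm psi : C := \sum_x `|psi x| ^+ 2.
Definition fsub psi phi : bs m -> C := fun x => psi x - phi x.

Lemma nrm_ge0 psi : 0 <= nrm psi.
Proof. by apply: sumr_ge0 => x _; rewrite exprn_ge0. Qed.

Lemma applyop_sub A psi phi :
  applyop A (fsub psi phi) = fsub (applyop A psi) (applyop A phi).
Proof.
apply: functional_extensionality => x; rewrite /applyop /fsub -sumrB.
by apply: eq_bigr => y _; rewrite mulrBr.
Qed.

Lemma unitary_nrm A psi : unitaryf A -> nrm (applyop A psi) = nrm psi.
Proof.
move=> U; rewrite /nrm /applyop.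
transitivity (\sum_x \sum_y \sum_z (A x y * psi y) * (A x z * psi z)^*).
  apply: eq_bigr => x _; rewrite normCK rmorph_sum mulr_suml.
  by apply: eq_bigr => y _; rewrite mulr_sumr.
rewrite exchange_big /=; apply: eq_bigr => y _.
rewrite exchange_big /=.
transitivity (\sum_z (psi y * (psi z)^*) * (\sum_x (A x y)^* * A x z)^*).
  apply: eq_bigr => z _; rewrite rmorph_sum mulr_sumr; apply: eq_bigr => x _.
  rewrite !rmorphM /= conjCK; ring.
under eq_bigr => z _ do rewrite U.
rewrite (bigD1 y) //= big1 ?addr0.
  by rewrite eqxx rmorph1 mulr1 normCK.
by move=> z yz; rewrite eq_sym (negbTE yz) rmorph0 mulr0.
Qed.

Lemma nrm_sub_sym psi phi : nrm (fsub psi phi) = nrm (fsub phi psi).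
Proof. by apply: eq_bigr => x _; rewrite /fsub -normrN opprB. Qed.

End Lin.


Section Gates.
Variable R : realType.
Local Notation C := R[i].
Variable m : nat.

Section Generic.
Variable K : finType.
Variable put : bs m -> K -> bs m.
Variable get : bs m -> K.
Hypothesis getput : forall x k, get (put x k) = k.
Hypothesis putget : forall x, put x (get x) = x.
Hypothesis putput : forall x k k', put (put x k) k' = put x k'.

Lemma put_eq_indep x y k k' : (put x k == put y k) = (put x k' == put y k').
Proof.
apply/eqP/eqP => E.
  by rewrite -(putput x k k') E putput.
by rewrite -(putput x k' k) E putput.
Qed.

Lemma generic_unitary (U : K -> K -> C) : unitaryf U ->
  unitaryf (fun z x : bs m => (put x (get z) == z)%:R * U (get z) (get x)).
Proof.
move=> HU x y.
have E : forall z w, (put w (get z) == z)%:R * U (get z) (get w) =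
   \sum_k (z == put w k)%:R * U k (get w) :> C.
  move=> z w; rewrite (bigD1 (get z)) //= big1 ?addr0.
    by rewrite eq_sym.
  move=> k kz; case: eqP => [zE|]; last by rewrite mul0r.
  by move: kz; rewrite zE getput eqxx.
under eq_bigr => z _ do rewrite !E rmorph_sum mulr_suml.
rewrite exchange_big /=.
transitivity (\sum_k \sum_k' (put x k == put y k')%:R *
                 ((U k (get x))^* * U k' (get y))).
  apply: eq_bigr => k _.
  under eq_bigr => z _ do rewrite mulr_sumr.
  rewrite exchange_big /=; apply: eq_bigr => k' _.
  rewrite (bigD1 (put x k)) //= big1 ?addr0.
    rewrite eqxx; case: eqP => _; rewrite /= ?rmorph1 ?rmorph0; ring.
  move=> z zk; rewrite (negbTE zk) rmorph0; ring.
transitivity (\sum_k (put x k == put y k)%:R * ((U k (get x))^* * U k (get y))).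
  apply: eq_bigr => k _; rewrite (bigD1 k) //= big1 ?addr0 //.
  move=> k' kk'; case: eqP => [E'|]; last by rewrite mul0r.
  by move: kk'; rewrite -(getput x k) E' getput eqxx.
under eq_bigr => k _ do rewrite (put_eq_indep x y k (get y)).
rewrite -mulr_sumr HU.
case: (eqVneq x y) => [->|xy]; first by rewrite putget !eqxx mulr1.
rewrite putget.
case: eqP => [E1|]; last by rewrite mul0r.
case: eqP => [E2|]; last by rewrite mulr0.
by case/eqP: xy; rewrite -[x]putget E2 E1.
Qed.
End Generic.

Definition put1 (a : 'I_m) (x : bs m) (b : bool) : bs m :=
  [ffun q => if q == a then b else x q].
Definition put2 (a b : 'I_m) (x : bs m) (p : bool * bool) : bs m :=
  [ffun q => if q == a then p.1 else if q == b then p.2 else x q].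

Lemma gate_op_G1 a U x y :
  gate_op (G1 a U) x y = (put1 a y (x a) == x)%:R * U (x a) (y a) :> C.
Proof.
rewrite /gate_op /=; congr (_%:R * _); congr nat_of_bool.
apply/forallP/eqP => [H|<- q].
  apply/ffunP => q; rewrite ffunE; case: eqP => [->//|/eqP qa].
  by have := H q; rewrite inE qa /= => /eqP ->.
by rewrite inE ffunE; case: eqP => //= _; rewrite eqxx.
Qed.

Lemma gate_op_G2 a b U x y :
  gate_op (G2 a b U) x y = (put2 a b y (x a, x b) == x)%:R * U (x a, x b) (y a, y b) :> C.
Proof.
rewrite /gate_op /=; congr (_%:R * _); congr nat_of_bool.
apply/forallP/eqP => [H|<- q].
  apply/ffunP => q; rewrite ffunE; case: eqP => [->//|/eqP qa].
  case: eqP => [->//|/eqP qb].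
  by have := H q; rewrite !inE (negbTE qa) (negbTE qb) /= => /eqP ->.
by rewrite !inE ffunE; case: eqP => //; case: eqP => //= _ _; rewrite eqxx.
Qed.

Lemma gate_unitary (g : gate R m) : gate_ok g -> unitaryf (gate_op g : bs m -> bs m -> C).
Proof.
case: g => [a U|a b U] /=.
  move=> HU.
  have -> : gate_op (G1 a U) = (fun z x : bs m => (put1 a x (z a) == z)%:R * U (z a) (x a) :> C).
    by do 2 (apply: functional_extensionality => ?); rewrite gate_op_G1.
  apply: (@generic_unitary _ (put1 a) (fun x => x a)) => //.
  - by move=> x k; rewrite ffunE eqxx.
  - by move=> x; apply/ffunP => q; rewrite ffunE; case: eqP => [->|].
  - by move=> x k k'; apply/ffunP => q; rewrite !ffunE; case: eqP.
move=> [ab HU].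
have -> : gate_op (G2 a b U) = (fun z x : bs m =>
   (put2 a b x (z a, z b) == z)%:R * U (z a, z b) (x a, x b) :> C).
  by do 2 (apply: functional_extensionality => ?); rewrite gate_op_G2.
apply: (@generic_unitary _ (put2 a b) (fun x => (x a, x b))) => //.
- by move=> x [k1 k2]; rewrite !ffunE eqxx eq_sym (negbTE ab) eqxx.
- by move=> x; apply/ffunP => q; rewrite ffunE; case: (q =P a) => [->//|_]; case: (q =P b) => [->|].
- by move=> x k k'; apply/ffunP => q; rewrite !ffunE; case: (q =P a) => //; case: (q =P b).
Qed.

Lemma apply_layer_sub (gs : seq (gate R m)) psi phi :
  apply_layer gs (fsub psi phi) = fsub (apply_layer gs psi) (apply_layer gs phi) :> (bs m -> C).
Proof. by elim: gs => //= g gs IH; rewrite IH applyop_sub. Qed.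

Lemma apply_layer_nrm (gs : seq (gate R m)) (psi : bs m -> C) :
  single_layer gs -> nrm (apply_layer gs psi) = nrm psi.
Proof.
case=> H _; elim: gs H => //= g gs IH [Hg H].
by rewrite unitary_nrm ?IH //; apply: gate_unitary.
Qed.

End Gates.


Section Oracle.
Variables n d m k : nat.
Local Notation w := (qwidth d n).
Local Notation om := (@oracle_map n d m k).
Implicit Types fs : nat -> option (bs (n + n)) -> option (bs (n + n)).

Lemma w_gt0 : (0 < w)%N.
Proof. by rewrite /qwidth addnS. Qed.

Definition slot_idx (y : bs m) (s : nat) : nat :=
  (\sum_(t < d.+1) getb y (s * w + t) * 2 ^ t)%N.
Definition slot_inp (y : bs m) (s : nat) : option (bs (n + n)) :=
  dec n (fun j => getb y (s * w + d.+1 + j)).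

Lemma om_E fs (y : bs m) (q : 'I_m) :
  om fs y q =
  if ((q < k * w) && (d.+1 + elen n <= q %% w) && (slot_idx y (q %/ w) <= d))%N
  then y q (+) enc (fs (slot_idx y (q %/ w)) (slot_inp y (q %/ w))) (q %% w - (d.+1 + elen n))
  else y q.
Proof.
rewrite /oracle_map ffunE /=.
by case: ifP => //= _; case: ifP.
Qed.

Lemma getb_om fs (y : bs m) p :
  ~~ ((p < k * w) && (d.+1 + elen n <= p %% w))%N -> getb (om fs y) p = getb y p.
Proof.
move=> H; rewrite /getb; case: insubP => //= q _ qp.
by rewrite om_E qp (negbTE H).
Qed.

Lemma mod_slot s t : (t < w)%N -> ((s * w + t) %% w = t)%N.
Proof. by move=> tw; rewrite modnMDl modn_small. Qed.

Lemma slot_idx_om fs (y : bs m) s : slot_idx (om fs y) s = slot_idx y s.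
Proof.
apply: eq_bigr => t _; rewrite getb_om // mod_slot.
  by apply/nandP; right; rewrite -ltnNge; exact: (leq_trans (ltn_ord t) (leq_addr _ _)).
by apply: (leq_trans (ltn_ord t)); rewrite /qwidth -addnA leq_addr.
Qed.

Lemma slot_inp_om fs (y : bs m) s : slot_inp (om fs y) s = slot_inp y s.
Proof.
rewrite /slot_inp /dec.
have H : forall j, (j < elen n)%N ->
   getb (om fs y) (s * w + d.+1 + j) = getb y (s * w + d.+1 + j).
  move=> j jl; rewrite getb_om // -addnA mod_slot.
    by apply/nandP; right; rewrite -ltnNge ltn_add2l.
  by rewrite /qwidth -addnA ltn_add2l ltn_addr.
rewrite H //; case: ifP => // _; congr Some; apply/ffunP => j; rewrite !ffunE H //.
by rewrite /elen ltnS.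
Qed.

Lemma om_invol fs : involutive (om fs).
Proof.
move=> y; apply/ffunP => q.
rewrite om_E slot_idx_om slot_inp_om om_E.
by case: ((q < k * w)%N && _ && _) => //; rewrite -addbA addbb addbF.
Qed.

Definition good fs fs' (y : bs m) : bool :=
  [forall s : 'I_k, (slot_idx y s <= d)%N ==>
     (fs (slot_idx y s) (slot_inp y s) == fs' (slot_idx y s) (slot_inp y s))].

Lemma good_om fs fs' fs'' y : good fs fs' (om fs'' y) = good fs fs' y.
Proof.
by apply: eq_forallb => s; rewrite slot_idx_om slot_inp_om.
Qed.

Lemma good_eq fs fs' y : good fs fs' y -> om fs y = om fs' y.
Proof.
move=> /forallP G; apply/ffunP => q; rewrite !om_E.
case: (ltnP q (k * w)) => //= qk.
case: ifP => //= /andP [_ hi].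
have sk : (q %/ w < k)%N by rewrite ltn_divLR ?w_gt0.
by have := G (Ordinal sk); rewrite /= hi /= => /eqP ->.
Qed.

Variable R : realType.
Local Notation C := R[i].
Local Notation OP fs := (@oracle_op R n d m k fs).

Lemma oracle_apply fs (psi : bs m -> C) :
  applyop (OP fs) psi = fun x => psi (om fs x).
Proof.
apply: functional_extensionality => x; rewrite /applyop /oracle_op.
rewrite (bigD1 (om fs x)) //= big1 ?addr0 ?om_invol ?eqxx ?mul1r //.
move=> y yx; case: eqP => [E|]; last by rewrite mul0r.
by move: yx; rewrite E om_invol eqxx.
Qed.

Lemma sum_om fs (F : bs m -> C) : \sum_x F (om fs x) = \sum_x F x.
Proof.
by rewrite [RHS](reindex_inj (can_inj (om_invol fs))).
Qed.

Lemma oracle_nrm fs (psi : bs m -> C) : nrm (applyop (OP fs) psi) = nrm psi.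
Proof. by rewrite oracle_apply /nrm (sum_om fs (fun x => `|psi x| ^+ 2)). Qed.

Lemma oracle_sub fs (psi phi : bs m -> C) :
  applyop (OP fs) (fsub psi phi) =
  fsub (applyop (OP fs) psi) (applyop (OP fs) phi).
Proof. exact: applyop_sub. Qed.

Lemma normB2 (a b : C) : `|a - b| ^+ 2 <= 2 * `|a| ^+ 2 + 2 * `|b| ^+ 2.
Proof.
have E : 2 * `|a| ^+ 2 + 2 * `|b| ^+ 2 = `|a - b| ^+ 2 + `|a + b| ^+ 2.
  rewrite !normCK rmorphB rmorphD /=; ring.
by rewrite E lerDl exprn_ge0.
Qed.

Lemma normD2 (a b : C) : `|a + b| ^+ 2 <= 2 * `|a| ^+ 2 + 2 * `|b| ^+ 2.
Proof. by have := normB2 a (- b); rewrite opprK normrN. Qed.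

Lemma oracle_diff fs fs' (psi : bs m -> C) :
  nrm (fsub (applyop (OP fs) psi) (applyop (OP fs') psi))
  <= 4 * \sum_y (~~ good fs fs' y)%:R * `|psi y| ^+ 2.
Proof.
rewrite !oracle_apply /nrm /fsub.
apply: (@le_trans _ _ (\sum_x ((~~ good fs fs' x)%:R *
     (2 * `|psi (om fs x)| ^+ 2 + 2 * `|psi (om fs' x)| ^+ 2)))).
  apply: ler_sum => x _; case: (boolP (good fs fs' x)) => G /=.
    by rewrite (good_eq G) subrr normr0 expr0n /= mul0r.
  by rewrite mul1r normB2.
have E1 : \sum_x (~~ good fs fs' x)%:R * `|psi (om fs x)| ^+ 2 = (\sum_y (~~ good fs fs' y)%:R * `|psi y| ^+ 2).
  have := sum_om fs (fun y => (~~ good fs fs' y)%:R * `|psi y| ^+ 2) => /= H.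
  rewrite -H.
  by apply: eq_bigr => x _; rewrite good_om.
have E2 : \sum_x (~~ good fs fs' x)%:R * `|psi (om fs' x)| ^+ 2 = (\sum_y (~~ good fs fs' y)%:R * `|psi y| ^+ 2).
  have := sum_om fs' (fun y => (~~ good fs fs' y)%:R * `|psi y| ^+ 2) => /= H.
  rewrite -H.
  by apply: eq_bigr => x _; rewrite good_om.
rewrite le_eqVlt; apply/orP; left; apply/eqP.
rewrite (_ : \sum_x _ = 2 * (\sum_x (~~ good fs fs' x)%:R * `|psi (om fs x)| ^+ 2)
   + 2 * (\sum_x (~~ good fs fs' x)%:R * `|psi (om fs' x)| ^+ 2)).
  by rewrite E1 E2; ring.
by rewrite !mulr_sumr -big_split; apply: eq_bigr => x _ /=; ring.
Qed.

End Oracle.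


Section Sym.
Variable R : realType.
Local Notation C := R[i].
Variables n d : nat.
Definition Wt := ({ffun bs n -> bs n} * bs n * {ffun 'I_d -> {ffun bs n -> bs (n + n)}})%type.

Lemma sum_invol (T : finType) (f : T -> T) (F : T -> C) :
  involutive f -> \sum_x F (f x) = \sum_x F x.
Proof. by move=> fK; rewrite [RHS](reindex_inj (can_inj fK)). Qed.

Definition updT (T : {ffun 'I_d -> {ffun bs n -> bs (n + n)}}) r f :
  {ffun 'I_d -> {ffun bs n -> bs (n + n)}} := [ffun i => if i == r then f else T i].

Lemma card_bs p : #|bs p| = (2 ^ p)%N.
Proof. by rewrite card_ffun card_bool card_ord. Qed.

Lemma inj_comp_perm (p : {perm bs (n + n)}) (f : {ffun bs n -> bs (n + n)}) :
  injectiveb [ffun x => p (f x)] = injectiveb f.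
Proof.
apply/injectiveP/injectiveP => H x y E.
  by apply: H; rewrite !ffunE E.
by apply: H; move: E; rewrite !ffunE => /perm_inj.
Qed.

Lemma inst_upd (w : Wt) r (p : {perm bs (n + n)}) :
  ((w.1, updT w.2 r [ffun x => p (w.2 r x)]) \in instances n d) = (w \in instances n d).
Proof.
rewrite !inE /=; congr (_ && _); apply: eq_forallb => i.
by rewrite ffunE; case: eqP => [->|//]; rewrite inj_comp_perm.
Qed.

Lemma img_count (r : 'I_d) (F : Wt -> C) (v : bs (n + n)) :
  (forall w f, F (w.1, updT w.2 r f) = F w) ->
  (2 ^ (n + n))%:R * \sum_(w in instances n d) [exists j, w.2 r j == v]%:R * F w
   = (2 ^ n)%:R * \sum_(w in instances n d) F w.
Proof.
move=> HF.
pose A v := \sum_(w in instances n d) [exists j, w.2 r j == v]%:R * F w.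
have Aconst : forall v v', A v = A v'.
  move=> v1 v2; rewrite /A !(big_mkcond (fun w => w \in instances n d)) /=.
  pose phi (w : Wt) : Wt := (w.1, updT w.2 r [ffun x => tperm v1 v2 (w.2 r x)]).
  have phiK : involutive phi.
    case=> w1 T; rewrite /phi /=; congr (_, _); apply/ffunP => i; rewrite !ffunE.
    case: eqP => [->|//]; apply/ffunP => x; rewrite !ffunE eqxx.
    by rewrite ffunE tpermK.
  rewrite -(sum_invol _ phiK); apply: eq_bigr => w _.
  rewrite inst_upd HF; case: (w \in instances n d) => //; congr (_%:R * _); congr nat_of_bool.
  apply/existsP/existsP => [[j /eqP E]|[j /eqP E]]; exists j.
    move: E; rewrite /phi /= ffunE eqxx ffunE => E.
    by apply/eqP; apply: (@perm_inj _ (tperm v1 v2)); rewrite E tpermR.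
  by rewrite /phi /= ffunE eqxx ffunE E tpermR.
have Sum : \sum_v A v = (2 ^ n)%:R * \sum_(w in instances n d) F w.
  rewrite /A exchange_big /= mulr_sumr; apply: eq_bigr => w win.
  rewrite -mulr_suml; congr (_ * _).
  have inj : injective (w.2 r).
    by move: win; rewrite inE => /andP [_ /forallP /(_ r) /injectiveP].
  rewrite -(card_bs n) -(card_codom inj) -sum1_card natr_sum [RHS]big_mkcond /=.
  apply: eq_bigr => u _; case: ifP => /codomP.
    by move=> [x ->]; case: existsP => // [[]]; exists x.
  by move=> H; case: existsP => // [[x /eqP E]]; case: H; exists x.
rewrite -Sum [RHS](eq_bigr (fun _ => A v)) ?sumr_const ?card_bs; last by move=> u _; apply: Aconst.
by rewrite mulr_natl.
Qed.


Section Simon.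
Variable p : 'I_n.
Variable u : bs n.
Hypothesis up : u p = false.
Definition Amap (x : bs n) : bs n := if x p then bxor x u else x.

Lemma Amap_invol : involutive Amap.
Proof.
move=> x; rewrite /Amap; have [xp|/negbTE xp] := boolP (x p); rewrite ?xp //.
rewrite ffunE xp up /=; apply/ffunP => q; rewrite !ffunE.
by rewrite -addbA addbb addbF.
Qed.

Lemma Amap_xor x y : Amap (bxor x y) = bxor (Amap x) (Amap y).
Proof.
rewrite /Amap ffunE; apply/ffunP => q.
case: (x p); case: (y p) => /=; rewrite !ffunE //.
- by case: (x q); case: (y q); case: (u q).
- by case: (x q); case: (y q); case: (u q).
- by case: (x q); case: (y q); case: (u q).
Qed.

Lemma Amap0 : Amap (zeros n) = zeros n.
Proof. by rewrite /Amap ffunE. Qed.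

Lemma forall2_invol (f : bs n -> bs n) (P : bs n -> bs n -> bool) :
  involutive f ->
  [forall x, forall y, P (f x) (f y)] = [forall x, forall y, P x y].
Proof.
move=> fK; apply/forallP/forallP => H x; apply/forallP => y.
  by have := H (f x) => /forallP /(_ (f y)); rewrite !fK.
by have := H (f x) => /forallP /(_ (f y)).
Qed.

Lemma simon_A (g : {ffun bs n -> bs n}) s :
  simon_pair [ffun x => g (Amap x)] (Amap s) = simon_pair g s.
Proof.
have Ainj := can_inj Amap_invol.
rewrite /simon_pair -{1}Amap0 (inj_eq Ainj); congr (_ && _).
rewrite -(forall2_invol (fun x y => (g x == g y) == ((y == x) || (y == bxor x s))) Amap_invol).
apply: eq_forallb => x; apply: eq_forallb => y.
rewrite !ffunE (inj_eq Ainj); congr ((_ == _) == (_ || _)).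
by rewrite -{2}(Amap_invol s) -Amap_xor (inj_eq Ainj).
Qed.
End Simon.

Lemma s_count_bit (F : Wt -> C) (z z' : bs n) p :
  z p -> z' p -> (forall w g s, F ((g, s), w.2) = F w) ->
  \sum_(w in instances n d) (w.1.2 == z)%:R * F w =
  \sum_(w in instances n d) (w.1.2 == z')%:R * F w.
Proof.
move=> zp z'p HF.
pose u := bxor z z'.
have up : u p = false by rewrite ffunE zp z'p.
pose A := Amap p u.
have AK : involutive A := Amap_invol up.
have Az' : A z' = z.
  rewrite /A /Amap z'p; apply/ffunP => q; rewrite !ffunE.
  by case: (z q); case: (z' q).
pose psi (w : Wt) : Wt := (([ffun x => w.1.1 (A x)], A w.1.2), w.2).
have psiK : involutive psi.
  case=> [[g s] T]; rewrite /psi /= AK; congr ((_, _), _).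
  by apply/ffunP => x; rewrite !ffunE AK.
rewrite !(big_mkcond (fun w => w \in instances n d)) /=.
rewrite -(sum_invol _ psiK); apply: eq_bigr => w _.
rewrite /psi /= HF !inE /= (simon_A up).
by rewrite -{1}Az' (inj_eq (can_inj AK)).
Qed.

Lemma nonzero_bit (z : bs n) : z != zeros n -> exists p, z p.
Proof.
move=> nz; case: (pickP (fun p => z p)) => [p zp|H]; first by exists p.
by case/eqP: nz; apply/ffunP => q; rewrite ffunE; apply/negbTE; rewrite H.
Qed.

Lemma s_count (F : Wt -> C) (z z' : bs n) :
  z != zeros n -> z' != zeros n -> (forall w g s, F ((g, s), w.2) = F w) ->
  \sum_(w in instances n d) (w.1.2 == z)%:R * F w =
  \sum_(w in instances n d) (w.1.2 == z')%:R * F w.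
Proof.
move=> nz nz' HF.
case: (pickP (fun p => z p && z' p)) => [p /andP [zp z'p]|H].
  exact: s_count_bit zp z'p HF.
have [p zp] := nonzero_bit nz; have [p' z'p'] := nonzero_bit nz'.
pose z'' := bxor z z'.
have H1 : z'' p by rewrite ffunE zp; have := H p; rewrite zp /= => ->.
have H2 : z'' p' by rewrite ffunE z'p'; have := H p'; rewrite z'p' andbT => ->.
by rewrite (s_count_bit zp H1 HF) (s_count_bit H2 z'p' HF).
Qed.

End Sym.


Lemma aux_ineq j p a b c : (0 < p)%N -> (2 * (8 * j * p * (a * b) * c) + 8 * (a * b * c) <= 8 * j.+1 * (2 * p) * (a * b) * c)%N.
Proof.
move=> h.
have E1 : (2 * (8 * j * p * (a * b) * c) = 16 * j * p * (a * b * c))%N by nia.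
have E2 : (8 * j.+1 * (2 * p) * (a * b) * c = 16 * j * p * (a * b * c) + 16 * p * (a*b*c))%N by nia.
rewrite E1 E2 leq_add2l; move: (a * b * c) => x.
nia.
Qed.

Section Hyb.
Variable R : realType.
Local Notation C := R[i].
Variables n d m k : nat.
Local Notation OP fs := (@oracle_op R n d m k fs).
Variable layers : nat -> seq (gate R m).
Hypothesis Hlay : forall j, (j <= d)%N -> single_layer (layers j).

Local Notation Tt := {ffun 'I_d -> {ffun bs n -> bs (n + n)}}.

Definition hyb (J : nat) (fs : nat -> option (bs (n + n)) -> option (bs (n + n))) :=
  fun i x => if (i < J)%N then fs i x else None.

Fixpoint Hst (g : {ffun bs n -> bs n}) (T : Tt) (j : nat) : bs m -> C :=
  match j with
  | 0 => apply_layer (layers 0) (@psi0 R m)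
  | j'.+1 => apply_layer (layers j'.+1) (applyop (OP (hyb j'.+1 (shuf_fun g T))) (Hst g T j'))
  end.

Lemma tup_eq g g' (T T' : Tt) J i :
  (J <= d)%N -> (forall r : 'I_d, (r < J)%N -> T r = T' r) -> (i <= J)%N ->
  tup g T i = tup g' T' i.
Proof.
move=> Jd HT; case: i => [//|i] iJ /=.
case: insubP => [r _ ri|]; first by rewrite HT // ri.
by move/negP; case; apply: leq_trans iJ Jd.
Qed.

Lemma hyb_indep g g' (T T' : Tt) J :
  (J <= d)%N -> (forall r : 'I_d, (r < J)%N -> T r = T' r) ->
  hyb J (shuf_fun g T) = hyb J (shuf_fun g' T').
Proof.
move=> Jd HT; apply: functional_extensionality => i.
apply: functional_extensionality => x; rewrite /hyb; case: ifP => // iJ.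
rewrite /shuf_fun; case: x => // v.
rewrite (tup_eq g g' Jd HT (ltnW iJ)) (tup_eq g g' Jd HT iJ).
by [].
Qed.

Lemma Hst_indep g g' (T T' : Tt) j :
  (j <= d)%N -> (forall r : 'I_d, (r < j)%N -> T r = T' r) ->
  Hst g T j = Hst g' T' j.
Proof.
elim: j => [//|j IH] jd HT /=.
rewrite IH ?(ltnW jd) //; last by move=> r rj; apply: HT; apply: ltnW.
by rewrite (hyb_indep g g' jd HT).
Qed.

Lemma psi0_nrm : nrm (@psi0 R m) = 1.
Proof.
rewrite /nrm /psi0 (bigD1 (zeros m)) //= big1 ?addr0 ?eqxx ?normr1 ?expr1n //.
by move=> x /negbTE ->; rewrite normr0 expr0n.
Qed.

Lemma Hst_nrm g T j : (j <= d)%N -> nrm (Hst g T j) = 1.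
Proof.
elim: j => [|j IH] jd /=.
  by rewrite apply_layer_nrm ?psi0_nrm //; apply: Hlay.
rewrite apply_layer_nrm; last exact: Hlay.
by rewrite oracle_nrm IH // ltnW.
Qed.

Lemma evolve_nrm fs j : (j <= d)%N -> nrm (@evolve R n d m k fs layers j) = 1.
Proof.
elim: j => [|j IH] jd /=.
  by rewrite apply_layer_nrm ?psi0_nrm //; apply: Hlay.
rewrite apply_layer_nrm; last exact: Hlay.
by rewrite oracle_nrm IH // ltnW.
Qed.

Lemma nrm_add2 (a b : bs m -> C) :
  nrm (fun x => a x + b x) <= 2 * nrm a + 2 * nrm b.
Proof.
rewrite /nrm !mulr_sumr -big_split /=; apply: ler_sum => x _; exact: normD2.
Qed.

Definition Bad (g : {ffun bs n -> bs n}) (T : Tt) (j : nat) : C :=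
  \sum_y (~~ @good n d m k (shuf_fun g T) (hyb j.+1 (shuf_fun g T)) y)%:R
         * `|Hst g T j y| ^+ 2.

Definition Err (g : {ffun bs n -> bs n}) (T : Tt) (j : nat) : C :=
  nrm (fsub (@evolve R n d m k (shuf_fun g T) layers j) (Hst g T j)).

Lemma err_step g T j : (j < d)%N -> Err g T j.+1 <= 2 * Err g T j + 8 * Bad g T j.
Proof.
move=> jd; rewrite /Err /=.
rewrite -apply_layer_sub apply_layer_nrm; last exact: Hlay.
set fs := shuf_fun g T.
set psi := evolve _ _ _ _ j.
set phi := Hst g T j.
have -> : fsub (applyop (OP fs) psi) (applyop (OP (hyb j.+1 fs)) phi) =
  (fun x => fsub (applyop (OP fs) psi) (applyop (OP fs) phi) x +
            fsub (applyop (OP fs) phi) (applyop (OP (hyb j.+1 fs)) phi) x).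
  by apply: functional_extensionality => x; rewrite /fsub addrA subrK.
apply: le_trans (nrm_add2 _ _) _.
rewrite -oracle_sub oracle_nrm; apply: lerD => //.
apply: le_trans (_ : 2 * (4 * Bad g T j) <= _); last by rewrite mulrA -natrM.
rewrite ler_pM2l ?ltr0n //; exact: oracle_diff.
Qed.

Definition inImg (f : {ffun bs n -> bs (n + n)}) (o : option (bs (n + n))) : bool :=
  if o is Some v then [exists x, f x == v] else false.

Lemma le_sum_term (I : finType) (P : pred I) (F : I -> C) i :
  P i -> (forall j, P j -> 0 <= F j) -> F i <= \sum_(j | P j) F j.
Proof.
move=> Pi H; rewrite (bigD1 i) //= lerDl; apply: sumr_ge0 => j /andP [Pj _].
exact: H.
Qed.

Lemma bad_ind g T j y : (j < d)%N ->
  (~~ @good n d m k (shuf_fun g T) (hyb j.+1 (shuf_fun g T)) y)%:R <=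
  \sum_(s : 'I_k) \sum_(r : 'I_d | (j <= r)%N) (inImg (T r) (slot_inp n d y s))%:R :> C.
Proof.
move=> jd.
have ge0 : 0 <= \sum_(s : 'I_k) \sum_(r : 'I_d | (j <= r)%N)
    (inImg (T r) (slot_inp n d y s))%:R :> C.
  by apply: sumr_ge0 => s _; apply: sumr_ge0 => r _; rewrite ler0n.
case: (boolP (good _ _ _ _ _)) => //= /forallPn [s].
rewrite negb_imply => /andP [idxd neq].
move: neq; rewrite /hyb.
case: (slot_idx n d y s) idxd => [|i'] idxd /=; first by rewrite eqxx.
case: ifP => ij; first by rewrite eqxx.
case E: (slot_inp n d y s) => [v|]; last by [].
rewrite /shuf_fun /=.
have i'd : (i' < d)%N by [].
case: insubP => [r _ ri|]; last by rewrite i'd.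
case: pickP => [x /eqP hx|] // _.
have H1 : (1 : C) <= (inImg (T r) (slot_inp n d y s))%:R.
  by rewrite E /=; case: existsP => // [[]]; exists x; rewrite hx.
apply: le_trans H1 _.
rewrite (bigD1 s) //=; apply: ler_wpDr.
  by apply: sumr_ge0 => s' _; apply: sumr_ge0 => r' _; rewrite ler0n.
rewrite (bigD1 r) /=.
  by rewrite lerDl; apply: sumr_ge0 => r' _; rewrite ler0n.
by rewrite ri; move: ij; rewrite ltnS => /negbT; rewrite -leqNgt.
Qed.

Local Notation I := (instances n d).

Lemma sum_Hst_nrm j : (j <= d)%N ->
  \sum_y \sum_(w in I) `|Hst w.1.1 w.2 j y| ^+ 2 = #|I|%:R.
Proof.
move=> jd; rewrite exchange_big /=.
rewrite (eq_bigr (fun _ => 1)); first by rewrite sumr_const.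
by move=> w _; rewrite -/(nrm _) Hst_nrm.
Qed.

Lemma img_step j (y : bs m) (s : 'I_k) (r : 'I_d) : (j <= r)%N ->
  (2 ^ (n + n))%:R * \sum_(w in I) (inImg (w.2 r) (slot_inp n d y s))%:R
      * `|Hst w.1.1 w.2 j y| ^+ 2
  <= (2 ^ n)%:R * \sum_(w in I) `|Hst w.1.1 w.2 j y| ^+ 2.
Proof.
move=> jr.
case E: (slot_inp n d y s) => [v|] /=.
  rewrite (@img_count R n d r (fun w => `|Hst w.1.1 w.2 j y| ^+ 2) v) //.
  move=> w f /=; congr (`| _ | ^+ 2); apply: (congr1 (fun h => h y)).
  have jd : (j <= d)%N by apply: leq_trans jr _; apply: ltnW.
  apply: Hst_indep => // r' r'j; rewrite /updT ffunE; case: eqP => // E'.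
  by move: r'j; rewrite E' ltnNge jr.
rewrite big1 ?mulr0; last by move=> w _; rewrite mul0r.
by rewrite mulr_ge0 ?ler0n // sumr_ge0 // => w _; rewrite exprn_ge0.
Qed.

Lemma bad_total j : (j < d)%N ->
  (2 ^ n)%:R * \sum_(w in I) Bad w.1.1 w.2 j <= (k * d)%:R * #|I|%:R.
Proof.
move=> jd.
pose G (w : Wt n d) y := `|Hst w.1.1 w.2 j y| ^+ 2.
have G0 : forall w y, 0 <= G w y by move=> w y; rewrite exprn_ge0.
have A : \sum_(w in I) Bad w.1.1 w.2 j <=
   \sum_y \sum_(s : 'I_k) \sum_(r : 'I_d | (j <= r)%N)
     \sum_(w in I) (inImg (w.2 r) (slot_inp n d y s))%:R * G w y.
  apply: le_trans (_ : \sum_(w in I) \sum_y (\sum_(s : 'I_k) \sum_(r : 'I_d | (j <= r)%N)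
      (inImg (w.2 r) (slot_inp n d y s))%:R) * G w y <= _).
    apply: ler_sum => w _; apply: ler_sum => y _.
    by apply: ler_wpM2r; [exact: exprn_ge0 | exact: bad_ind].
  rewrite le_eqVlt; apply/orP; left; apply/eqP.
  rewrite exchange_big /=; apply: eq_bigr => y _.
  under eq_bigr => w _ do rewrite mulr_suml.
  rewrite exchange_big /=; apply: eq_bigr => s _.
  under eq_bigr => w _ do rewrite mulr_suml.
  by rewrite exchange_big.
have B : (2 ^ (n + n))%:R * \sum_(w in I) Bad w.1.1 w.2 j <=
   (2 ^ n)%:R * ((k * d)%:R * #|I|%:R).
  apply: le_trans (_ : (2 ^ (n + n))%:R * (\sum_y \sum_(s : 'I_k) \sum_(r : 'I_d | (j <= r)%N)
     \sum_(w in I) (inImg (w.2 r) (slot_inp n d y s))%:R * G w y) <= _).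
    by rewrite ler_pM2l ?ltr0n ?expn_gt0.
  apply: le_trans (_ : \sum_y \sum_(s : 'I_k) \sum_(r : 'I_d)
      (2 ^ n)%:R * \sum_(w in I) G w y <= _).
    rewrite [X in X <= _]mulr_sumr; apply: ler_sum => y _.
    rewrite [X in X <= _]mulr_sumr; apply: ler_sum => s _.
    rewrite [X in X <= _]mulr_sumr [X in X <= _]big_mkcond /=; apply: ler_sum => r _.
    case: ifP => jr; first exact: img_step.
    by rewrite mulr_ge0 ?ler0n ?sumr_ge0.
  under eq_bigr => y _ do rewrite sumr_const sumr_const !card_ord -mulrnA.
  rewrite sumrMnl -mulr_sumr sum_Hst_nrm ?(ltnW jd) // -mulr_natr !natrM.
  by rewrite le_eqVlt; apply/orP; left; apply/eqP; ring.
rewrite expnD natrM -mulrA ler_pM2l ?ltr0n ?expn_gt0 // in B.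
Qed.

Lemma Err0 g T : Err g T 0 = 0.
Proof.
by rewrite /Err /nrm big1 // => x _; rewrite /fsub /= subrr normr0 expr0n.
Qed.

Lemma Err_ge0 g T j : 0 <= Err g T j.
Proof. exact: nrm_ge0. Qed.

Lemma Bad_ge0 g T j : 0 <= Bad g T j.
Proof. by apply: sumr_ge0 => y _; rewrite mulr_ge0 ?ler0n ?exprn_ge0. Qed.

Lemma err_total j : (j <= d)%N ->
  (2 ^ n)%:R * \sum_(w in I) Err w.1.1 w.2 j <= (8 * j * 2 ^ j * (k * d))%:R * #|I|%:R.
Proof.
elim: j => [|j IH] jd.
  by rewrite big1 ?mulr0 ?mul0n ?mul0r // => w _; rewrite Err0.
have IH' := IH (ltnW jd).
have BT := bad_total jd.
apply: le_trans (_ : (2 ^ n)%:R * \sum_(w in I) (2 * Err w.1.1 w.2 j + 8 * Bad w.1.1 w.2 j) <= _).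
  rewrite ler_pM2l ?ltr0n ?expn_gt0 //; apply: ler_sum => w _; exact: err_step.
rewrite big_split /= -!mulr_sumr mulrDr !mulrA ![_ * 2]mulrC ![_ * 8]mulrC -!mulrA.
apply: le_trans (_ : 2 * ((8 * j * 2 ^ j * (k * d))%:R * #|I|%:R) +
                     8 * ((k * d)%:R * #|I|%:R) <= _).
  apply: lerD; rewrite ler_pM2l ?ltr0n //.
rewrite -!natrM -natrD ler_nat expnS.
have h : (0 < 2 ^ j)%N by rewrite expn_gt0.
exact: aux_ineq.
Qed.

Lemma success_le out g s T :
  @success_on R n d m k layers out g s T <=
  2 * \sum_x (out x == s)%:R * `|Hst g T d x| ^+ 2 + 2 * Err g T d.
Proof.
rewrite /success_on /Err /nrm !mulr_sumr -big_split /=; apply: ler_sum => x _.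
set e := evolve _ _ _ _ _ x.
have -> : e = Hst g T d x + fsub (evolve d k (shuf_fun g T) layers d) (Hst g T d) x.
  by rewrite /fsub /e addrC subrK.
apply: le_trans (_ : (out x == s)%:R * (2 * `|Hst g T d x| ^+ 2 +
   2 * `|fsub (evolve d k (shuf_fun g T) layers d) (Hst g T d) x| ^+ 2) <= _).
  by apply: ler_wpM2l; rewrite ?ler0n ?normD2.
rewrite mulrDr mulrCA; apply: lerD => //.
rewrite mulrCA ler_pM2l ?ltr0n //.
case: (out x == s) => /=; rewrite ?mul1r ?mul0r //.
by rewrite exprn_ge0.
Qed.

Lemma Q_bound out :
  (2 ^ n).-1%:R * \sum_(w in I) \sum_x (out x == w.1.2)%:R * `|Hst w.1.1 w.2 d x| ^+ 2
  <= #|I|%:R.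
Proof.
rewrite exchange_big /= mulr_sumr.
rewrite -(sum_Hst_nrm (leqnn d)).
apply: ler_sum => x _.
set G := fun w : Wt n d => `|Hst w.1.1 w.2 d x| ^+ 2.
have HG : forall (w : Wt n d) g s, G ((g, s), w.2) = G w.
  by move=> w g s; rewrite /G /= (Hst_indep g w.1.1 (T' := w.2)).
have Hnz : forall w, w \in I -> w.1.2 != zeros n.
  by move=> w; rewrite inE => /andP [/andP [] ] .
case: (eqVneq (out x) (zeros n)) => [oz|onz].
  rewrite big1 ?mulr0; last first.
    by move=> w win; rewrite oz eq_sym (negbTE (Hnz w win)) mul0r.
  by apply: sumr_ge0 => w _; rewrite exprn_ge0.
pose S z := \sum_(w in I) (w.1.2 == z)%:R * G w.
have SE : \sum_(w in I) (out x == w.1.2)%:R * G w = S (out x).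
  by apply: eq_bigr => w _; rewrite eq_sym.
rewrite SE.
have Sc : forall z, z != zeros n -> S z = S (out x).
  by move=> z nz; apply: s_count.
have card1 : #|[pred z : bs n | z != zeros n]| = (2 ^ n).-1.
  by rewrite -(card_bs n) -(cardC1 (zeros n)); apply: eq_card => z.
have : \sum_(z | z != zeros n) S z = S (out x) *+ (2 ^ n).-1.
  by rewrite (eq_bigr (fun _ => S (out x))) ?sumr_const ?card1 // => z nz; apply: Sc.
rewrite -mulr_natl => <-.
rewrite le_eqVlt; apply/orP; left; apply/eqP.
rewrite /S exchange_big /=; apply: eq_bigr => w win.
rewrite -mulr_suml (bigD1 w.1.2) ?Hnz //= eqxx big1 ?addr0 ?mul1r //.
by move=> z /andP [_ zw]; rewrite eq_sym (negbTE zw).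
Qed.


End Hyb.


Section Final.
Variable R : realType.
Local Notation C := R[i].
Variables n d m k : nat.
Variable layers : nat -> seq (gate R m).
Hypothesis Hlay : forall j, (j <= d)%N -> single_layer (layers j).
Variable out : bs m -> bs n.
Local Notation I := (instances n d).

Lemma total_bound : (0 < n)%N ->
  (2 ^ n)%:R * \sum_(w in I) @success_on R n d m k layers out w.1.1 w.1.2 w.2
  <= (4 + 16 * d * 2 ^ d * (k * d))%:R * #|I|%:R.
Proof.
move=> n0.
pose Q (w : Wt n d) := \sum_x (out x == w.1.2)%:R * `|Hst k layers w.1.1 w.2 d x| ^+ 2 : C.
have Q0 : forall w, 0 <= Q w.
  by move=> w; apply: sumr_ge0 => x _; rewrite mulr_ge0 ?ler0n ?exprn_ge0.
apply: le_trans (_ : (2 ^ n)%:R * (2 * \sum_(w in I) Q w +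
                   2 * \sum_(w in I) Err k layers w.1.1 w.2 d) <= _).
  rewrite ler_pM2l ?ltr0n ?expn_gt0 // !mulr_sumr -big_split /=.
  by apply: ler_sum => w _; apply: success_le.
have HQ := Q_bound k Hlay out.
have HE := err_total n k Hlay (leqnn d).
have HQ2 : (2 ^ n)%:R * \sum_(w in I) Q w <= 2 * #|I|%:R.
  apply: le_trans (_ : 2 * ((2 ^ n).-1%:R * \sum_(w in I) Q w) <= _); last first.
    by rewrite ler_pM2l ?ltr0n.
  rewrite mulrA ler_wpM2r ?sumr_ge0 // -natrM ler_nat.
  have : (2 <= 2 ^ n)%N by rewrite -{1}(expn1 2) leq_exp2l.
  by move: (2 ^ n)%N => p; lia.
rewrite mulrDr !mulrA ![_ * 2]mulrC -!mulrA.
apply: le_trans (_ : 2 * (2 * #|I|%:R) + 2 * ((8 * d * 2 ^ d * (k * d))%:R * #|I|%:R) <= _).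
  by apply: lerD; rewrite ler_pM2l ?ltr0n.
rewrite -!natrM -!natrD ler_nat.
nia.
Qed.

End Final.

Lemma final_nat A c n x : (0 < n)%N -> (x <= n ^ c + c)%N ->
  (4 + A * x <= n ^ (c + 4 + A + A * c) + (c + 4 + A + A * c))%N.
Proof.
move=> n0 hx.
have h1 : (A * x <= A * n ^ c + A * c)%N by rewrite -mulnDr leq_mul2l hx orbT.
suff h2 : (A * n ^ c <= n ^ (c + 4 + A + A * c) + A)%N by lia.
case: (ltnP n 2) => n2.
  have -> : n = 1%N by lia.
  by rewrite !exp1n muln1 leq_addl.
have e : (n ^ (c + 4 + A + A * c) = n ^ c * n ^ (4 + A + A * c))%N.
  by rewrite -expnD !addnA.
rewrite e mulnC.
apply: leq_trans (_ : n ^ c * n ^ (4 + A + A * c) <= _)%N; last exact: leq_addr.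
rewrite leq_mul2l; apply/orP; right.
case: (posnP A) => [->//|A0].
apply: leq_trans (ltnW (ltn_expl A (isT : 1 < 2)%N)) _.
have h3 : (2 ^ A <= n ^ A)%N by rewrite leq_exp2r.
apply: leq_trans h3 _.
by rewrite leq_exp2l //; lia.
Qed.

Theorem mainTheorem5 (R : realType) (d : nat) (hd : (1 <= d)%N) (c : nat) :
  exists C0 : nat,
    forall (n m k : nat),
      (k * qwidth d n <= m)%N ->
      (m <= n ^ c + c)%N ->
      forall (layers : nat -> seq (gate R m)),
        (forall j, (j <= d)%N -> single_layer (layers j)) ->
        forall (out : bs m -> bs n),
          @success_prob R n d m k layers out <= (n ^ C0 + C0)%:R / 2 ^+ n :> R[i].
Proof.
pose A := (16 * d * 2 ^ d * d)%N.
exists (c + 4 + A + A * c)%N.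
move=> n m k Hkm Hm layers Hlay out.
rewrite /success_prob.
case: (posnP #|instances n d|) => [I0|Ipos].
  by rewrite I0 invr0 mulr0 divr_ge0 ?ler0n // exprn_ge0 ?ler0n.
have n0 : (0 < n)%N.
  move: Ipos; rewrite card_gt0 => /set0Pn [w]; rewrite inE => /andP [/andP [nz _] _].
  rewrite lt0n; apply/eqP => nE; apply: (negP nz); apply/eqP/ffunP => i.
  by have := ltn_ord i; rewrite {2}nE.
have TB := total_bound k Hlay out n0.
rewrite -natrX ler_pdivrMr ?ltr0n // mulrAC ler_pdivlMr ?ltr0n ?expn_gt0 //.
rewrite mulrC; apply: le_trans TB _.
rewrite ler_wpM2r ?ler0n // ler_nat.
have kw : (k <= m)%N.
  apply: leq_trans Hkm; rewrite -{1}(muln1 k) leq_mul2l; apply/orP; right.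
  by rewrite /qwidth addnS.
have -> : (16 * d * 2 ^ d * (k * d) = A * k)%N by rewrite /A; nia.
apply: final_nat => //; exact: leq_trans kw Hm.
Qed.
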